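(* Let $\bm{x}\in\mathbb{R}^d$, $X\in\mathbb{R}^{d\times n}$, ${\bm w}\in\mathbb{R}^n$, $\alpha_1>0$, $\alpha_2\ge 0$, and define for ${\bm z}\in\mathbb{R}^n$ $$f({\bm z})=\tfrac12\|\bm{x}-X{\bm z}\|_2^2+\alpha_1\|X\,\mathrm{Diag}({\bm z})\|_*+\tfrac{\alpha_2}{2}\|{\bm z}-{\bm w}\|_2^2 .$$ Suppose (after reordering columns/coordinates consistently) $X=[\hat X,\tilde X]$ with $\tilde X\in\mathbb{R}^{d\times q}$, $\hat X\in\mathbb{R}^{d\times(n-q)}$, ${\bm w}=[\hat{\bm w};\tilde{\bm w}]$ with $\tilde{\bm w}\in\mathbb{R}^q$, and let ${\bm z}=[\hat{\bm z};\tilde{\bm z}]$ be any vector split the same way. Let $\bar{\bm x}_0=\tilde X\mathbf{1}/q$, $\bar z=\mathbf{1}^T\tilde{\bm z}/q$, $\bar w=\mathbf{1}^T\tilde{\bm w}/q$, and let $\epsilon\ge0$ be such that $$\max\{\|\tilde X-\bar{\bm x}_0\mathbf{1}^T\|_*,\ \|\tilde X-\bar{\bm x}_0\mathbf{1}^T\|_F,\ \|\tilde X-\bar{\bm x}_0\mathbf{1}^T\|_2\}\le\epsilon\quad\text{and}\quad\|\tilde{\bm w}-\bar w\mathbf{1}\|_2\le\epsilon .$$ Let ${\bm y}^*\in\mathbb{R}^q$ be the optimal solution of $\min_{{\bm y}}\|{\bm y}-\tilde{\bm w}\|_2^2$ s.t. ${\bm y}^T\mathbf{1}=q\bar z$.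 Assume $\bar{\bm x}_0\neq 0$ and $[\hat X\mathrm{Diag}(\hat{\bm z})\ \ \bar{\bm x}_0\tilde{\bm z}^T]\neq 0$. Define $$\gamma=\Big(\big(\alpha_1+\|\bm{x}-\hat X\hat{\bm z}-\tilde X(\bar z\mathbf{1})\|_2\big)\|\tilde{\bm z}\|_2+\alpha_1|\bar z|\Big)\epsilon,$$ $$\delta=\sqrt{\frac{\Big(2\gamma-\alpha_2\sum_{j=1}^q(y_j^*-\bar z)(y_j^*+\bar z-2\tilde w_j)\Big)\,\big\|[\hat X\mathrm{Diag}(\hat{\bm z})\ \ \bar{\bm x}_0\tilde{\bm z}^T]\big\|_2}{\alpha_1\|\bar{\bm x}_0\|_2^2}} .$$ If $\|\tilde{\bm z}-\bar z\mathbf{1}\|_2>\delta$, then $f([\hat{\bm z};\tilde{\bm z}])>f([\hat{\bm z};\bar z\mathbf{1}])$.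
   Context: $\|\cdot\|_*$ is the nuclear norm (sum of singular values), $\|\cdot\|_F$ the Frobenius norm, $\|\cdot\|_2$ the Euclidean norm for vectors and spectral norm for matrices. $\mathrm{Diag}({\bm z})$ is the diagonal matrix with ${\bm z}$ on its main diagonal; $\mathbf{1}$ is the all-ones vector of the appropriate length ($\mathbb{R}^q$ above). The quantity $\|X\mathrm{Diag}({\bm z})\|_*$ is called the trace Lasso of ${\bm z}$. (The expression under the square root is nonnegative since $\gamma\ge0$ and $\sum_j(y_j^*-\bar z)(y_j^*+\bar z-2\tilde w_j)=\|{\bm y}^*-\tilde{\bm w}\|_2^2-\|\bar z\mathbf{1}-\tilde{\bm w}\|_2^2\le 0$.) *)

(* Defs.v *)
From HB Require Import structures.
From mathcomp Require Import all_boot all_order all_algebra.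
From mathcomp Require Import boolp classical_sets reals.
Set Implicit Arguments. Unset Strict Implicit. Unset Printing Implicit Defensive.
Import Order.TTheory GRing.Theory Num.Theory.
Local Open Scope ring_scope.
Local Open Scope classical_set_scope.

(* Singular value decomposition A = U * Sigma * V^T, with U, V orthogonal and
   Sigma the m x n rectangular "diagonal" matrix with nonnegative entries s 0, s 1, ...
   on its main diagonal (only s i for i < minn m n matter). *)
Definition is_svd (R : realType) (m n : nat) (A : 'M[R]_(m, n))
  (U : 'M[R]_m) (s : nat -> R) (V : 'M[R]_n) : Prop :=
  U^T *m U = 1%:M /\ V^T *m V = 1%:M /\ (forall i, 0 <= s i) /\
  A = U *m (\matrix_(i < m, j < n) (if (i : nat) == j then s i else 0)) *m V^T.

Definition nucnorm (R : realType) (m n : nat) (A : 'M[R]_(m, n)) : R :=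
  xget 0 [set t | exists U s V, is_svd A U s V /\ t = \sum_(i < minn m n) s i].

Definition specnorm (R : realType) (m n : nat) (A : 'M[R]_(m, n)) : R :=
  xget 0 [set t | exists U s V, is_svd A U s V /\
                   t = \big[Num.max/0]_(i < minn m n) s i].

Definition fronorm (R : realType) (m n : nat) (A : 'M[R]_(m, n)) : R :=
  Num.sqrt (\sum_i \sum_j A i j ^+ 2).

Definition vnorm (R : realType) (n : nat) (v : 'cV[R]_n) : R :=
  Num.sqrt (\sum_i v i 0 ^+ 2).

Definition Diag (R : realType) (n : nat) (z : 'cV[R]_n) : 'M[R]_n := diag_mx z^T.

Definition ones (R : realType) (n : nat) : 'cV[R]_n := const_mx 1.

Definition fobj (R : realType) (d n : nat) (x : 'cV[R]_d) (X : 'M[R]_(d, n))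
  (w : 'cV[R]_n) (a1 a2 : R) (z : 'cV[R]_n) : R :=
  2^-1 * vnorm (x - X *m z) ^+ 2 + a1 * nucnorm (X *m Diag z)
  + a2 / 2 * vnorm (z - w) ^+ 2.

(* Main.v *)
Require Import Defs.
From HB Require Import structures.
From mathcomp Require Import all_boot all_order all_algebra.
From mathcomp Require Import boolp classical_sets reals.
From mathcomp Require Import topology normedtype derive.
From mathcomp Require Import ring lra.
Import Order.TTheory GRing.Theory Num.Theory.
Local Open Scope ring_scope.
Set Implicit Arguments. Unset Strict Implicit. Unset Printing Implicit Defensive.

Definition dot (R : realType) n (u v : 'cV[R]_n) : R := (u^T *m v) 0 0.

Lemma dotE (R : realType) n (u v : 'cV[R]_n) : dot u v = \sum_i u i 0 * v i 0.
Proof. by rewrite /dot mxE; apply: eq_bigr => i _; rewrite mxE. Qed.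

Lemma dotC (R : realType) n (u v : 'cV[R]_n) : dot u v = dot v u.
Proof. by rewrite !dotE; apply: eq_bigr => i _; rewrite mulrC. Qed.

Lemma dotDl (R : realType) n (u w v : 'cV[R]_n) : dot (u + w) v = dot u v + dot w v.
Proof. by rewrite !dotE -big_split; apply: eq_bigr => i _; rewrite mxE mulrDl. Qed.

Lemma dotDr (R : realType) n (u w v : 'cV[R]_n) : dot v (u + w) = dot v u + dot v w.
Proof. by rewrite ![dot v _]dotC dotDl. Qed.

Lemma dotZl (R : realType) n c (u v : 'cV[R]_n) : dot (c *: u) v = c * dot u v.
Proof. by rewrite !dotE mulr_sumr; apply: eq_bigr => i _; rewrite mxE mulrA. Qed.

Lemma dotZr (R : realType) n c (u v : 'cV[R]_n) : dot v (c *: u) = c * dot v u.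
Proof. by rewrite ![dot v _]dotC dotZl. Qed.

Lemma dotNl (R : realType) n (u v : 'cV[R]_n) : dot (- u) v = - dot u v.
Proof. by rewrite -scaleN1r dotZl mulN1r. Qed.

Lemma dotNr (R : realType) n (u v : 'cV[R]_n) : dot v (- u) = - dot v u.
Proof. by rewrite ![dot v _]dotC dotNl. Qed.

Lemma dotBl (R : realType) n (u w v : 'cV[R]_n) : dot (u - w) v = dot u v - dot w v.
Proof. by rewrite dotDl dotNl. Qed.

Lemma dotBr (R : realType) n (u w v : 'cV[R]_n) : dot v (u - w) = dot v u - dot v w.
Proof. by rewrite dotDr dotNr. Qed.

Lemma dot0l (R : realType) n (v : 'cV[R]_n) : dot 0 v = 0.
Proof. by rewrite dotE big1 // => i _; rewrite mxE mul0r. Qed.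

Lemma dot0r (R : realType) n (v : 'cV[R]_n) : dot v 0 = 0.
Proof. by rewrite dotC dot0l. Qed.

Lemma dotvv_ge0 (R : realType) n (v : 'cV[R]_n) : 0 <= dot v v.
Proof. by rewrite dotE sumr_ge0 // => i _; rewrite -expr2 sqr_ge0. Qed.

Lemma vnormE (R : realType) n (v : 'cV[R]_n) : vnorm v = Num.sqrt (dot v v).
Proof. by rewrite /vnorm dotE; congr Num.sqrt; apply: eq_bigr => i _; rewrite expr2. Qed.

Lemma vnorm2 (R : realType) n (v : 'cV[R]_n) : vnorm v ^+ 2 = dot v v.
Proof. by rewrite vnormE sqr_sqrtr // dotvv_ge0. Qed.

Lemma vnorm_ge0 (R : realType) n (v : 'cV[R]_n) : 0 <= vnorm v.
Proof. by rewrite vnormE sqrtr_ge0. Qed.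

Lemma dotvv_eq0 (R : realType) n (v : 'cV[R]_n) : (dot v v == 0) = (v == 0).
Proof.
apply/idP/idP; last by move/eqP->; rewrite dot0l.
rewrite dotE psumr_eq0; last by move=> i _; rewrite -expr2 sqr_ge0.
move/allP => H; apply/eqP/matrixP => i j; rewrite (ord1 j) mxE.
have := H i (mem_index_enum i); rewrite implyTb -expr2 sqrf_eq0.
by move/eqP.
Qed.

Lemma vnorm_eq0 (R : realType) n (v : 'cV[R]_n) : (vnorm v == 0) = (v == 0).
Proof.
by rewrite -dotvv_eq0 -vnorm2 sqrf_eq0.
Qed.

Lemma dot_mull (R : realType) m n (A : 'M[R]_(m, n)) u v :
  dot (A *m u) v = dot u (A^T *m v).
Proof. by rewrite /dot trmx_mul mulmxA. Qed.

Lemma dot_orth (R : realType) m n (U : 'M[R]_(m, n)) (hU : U^T *m U = 1%:M) a b :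
  dot (U *m a) (U *m b) = dot a b.
Proof. by rewrite dot_mull mulmxA hU mul1mx. Qed.

Lemma vnorm_orth (R : realType) m n (U : 'M[R]_(m, n)) (hU : U^T *m U = 1%:M) a :
  vnorm (U *m a) = vnorm a.
Proof. by rewrite !vnormE dot_orth. Qed.

Lemma vnormZ (R : realType) n c (v : 'cV[R]_n) : vnorm (c *: v) = `|c| * vnorm v.
Proof.
by rewrite !vnormE dotZl dotZr mulrA -expr2 sqrtrM ?sqr_ge0 // sqrtr_sqr.
Qed.

Lemma vnormN (R : realType) n (v : 'cV[R]_n) : vnorm (- v) = vnorm v.
Proof. by rewrite -scaleN1r vnormZ normrN1 mul1r. Qed.

Lemma vnorm_le (R : realType) m n (a : 'cV[R]_m) (b : 'cV[R]_n) :
  (vnorm a <= vnorm b) = (dot a a <= dot b b).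
Proof. by rewrite !vnormE ler_sqrt // dotvv_ge0. Qed.

Lemma vnorm_le_mul (R : realType) m n c (a : 'cV[R]_m) (b : 'cV[R]_n) : 0 <= c ->
  (vnorm a <= c * vnorm b) = (dot a a <= c ^+ 2 * dot b b).
Proof.
move=> c0; rewrite -(ger0_norm c0) -vnormZ vnorm_le dotZl dotZr mulrA -expr2.
by rewrite ger0_norm.
Qed.

Lemma CS (R : realType) n (u v : 'cV[R]_n) : dot u v ^+ 2 <= dot u u * dot v v.
Proof.
have [v0|vn0] := eqVneq v 0.
  by rewrite v0 dot0r dot0l expr0n /= mulr0.
have hv : 0 < dot v v by rewrite lt_def dotvv_eq0 vn0 dotvv_ge0.
pose t := dot u v / dot v v.
have := dotvv_ge0 (u - t *: v).
rewrite dotBl !dotBr !dotZl !dotZr (dotC v u) /t.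
have hv0 : dot v v != 0 by rewrite gt_eqF.
move=> H.
have : 0 <= dot u u * dot v v - dot u v ^+ 2.
  have -> : dot u u * dot v v - dot u v ^+ 2 =
    (dot u u - dot u v / dot v v * dot u v -
    (dot u v / dot v v * dot u v -
     dot u v / dot v v * (dot u v / dot v v * dot v v))) * dot v v.
    by field.
  by rewrite mulr_ge0 // ltW.
by rewrite subr_ge0.
Qed.

Lemma CSn (R : realType) n (u v : 'cV[R]_n) : dot u v <= vnorm u * vnorm v.
Proof.
have := CS u v; rewrite -ler_sqrt ?mulr_ge0 ?dotvv_ge0 //.
rewrite sqrtr_sqr sqrtrM ?dotvv_ge0 // -!vnormE => H.
exact: le_trans (ler_norm _) H.
Qed.

Lemma CSabs (R : realType) n (u v : 'cV[R]_n) : `|dot u v| <= vnorm u * vnorm v.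
Proof.
have := CS u v; rewrite -ler_sqrt ?mulr_ge0 ?dotvv_ge0 //.
by rewrite sqrtr_sqr sqrtrM ?dotvv_ge0 // -!vnormE.
Qed.

Lemma trmx_dot (R : realType) n (u x : 'cV[R]_n) : u^T *m x = (dot u x)%:M.
Proof. by rewrite [LHS]mx11_scalar. Qed.

Lemma householder (R : realType) n (a b : 'cV[R]_n) : vnorm a = vnorm b ->
  exists Q : 'M[R]_n, [/\ Q^T *m Q = 1%:M, Q^T = Q & Q *m a = b].
Proof.
move=> hab; have [->|nab] := eqVneq a b.
  by exists 1%:M; rewrite trmx1 mulmx1 mul1mx.
pose u := a - b; pose c := dot u u.
have c0 : c != 0 by rewrite dotvv_eq0 subr_eq0.
have hP : (u *m u^T) *m (u *m u^T) = c *: (u *m u^T).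
  by rewrite mulmxA -(mulmxA u) trmx_dot mul_mx_scalar -scalemxAl.
pose Q := 1%:M - (2 / c) *: (u *m u^T).
have QT : Q^T = Q by rewrite /Q linearB /= trmx1 linearZ /= trmx_mul trmxK.
exists Q; split => //.
  rewrite QT /Q mulmxBl mul1mx mulmxBr mulmx1 -scalemxAl -scalemxAr hP.
  rewrite scalerA scalerA.
  have -> : 2 / c * (2 / c) * c = 2 / c + 2 / c by field.
  by rewrite scalerDl opprB addrK subrK.
have hab2 : dot a a = dot b b by rewrite -!vnorm2 hab.
have hc : c = 2 * (dot a a - dot a b).
  by rewrite /c /u !dotBl !dotBr hab2 (dotC b a); ring.
rewrite /Q mulmxBl mul1mx -scalemxAl -mulmxA trmx_dot mul_mx_scalar scalerA.
have -> : 2 / c * dot u a = 1.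
  rewrite /u dotBl (dotC b a) hc; field.
  by move: c0; rewrite hc mulf_eq0 negb_or => /andP[].
by rewrite scale1r /u opprB addrC subrK.
Qed.

Import numFieldNormedType.Exports.
Local Open Scope classical_set_scope.
Local Open Scope ring_scope.

Lemma cont_sum (R : realType) (T : topologicalType) (I : finType) (F : I -> T -> R) :
  (forall i, continuous (F i)) -> continuous (fun x => \sum_i F i x).
Proof.
move=> H x.
suff : forall s : seq I, {for x, continuous (fun y => \sum_(i <- s) F i y)} by apply.
elim => [|i s IH].
  have -> : (fun y => \sum_(i <- [::]) F i y) = (fun=> 0) by apply/funext => y; rewrite big_nil.
  exact: cst_continuous.
have -> : (fun y => \sum_(j <- i :: s) F j y) = (fun y => F i y + \sum_(j <- s) F j y).
  by apply/funext => y; rewrite big_cons.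
exact: (cvgD (H i x) IH).
Qed.

Lemma cont_mul (R : realType) (T : topologicalType) (f g : T -> R) :
  continuous f -> continuous g -> continuous (fun x => f x * g x).
Proof. by move=> hf hg x; exact: continuousM (hf x) (hg x). Qed.

Lemma max_dir (R : realType) m n (A : 'M[R]_(m, n.+1)) :
  exists v : 'cV[R]_n.+1, dot v v = 1 /\
    forall x, dot x x = 1 -> dot (A *m x) (A *m x) <= dot (A *m v) (A *m v).
Proof.
pose g := fun r : 'rV[R]_n.+1 => \sum_i r 0 i * r 0 i.
pose S := [set r : 'rV[R]_n.+1 | g r = 1].
pose f := fun r : 'rV[R]_n.+1 =>
  \sum_i (\sum_j A i j * r 0 j) * (\sum_j A i j * r 0 j).
have cg : continuous g.
  by apply: cont_sum => i; apply: cont_mul; exact: coord_continuous.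
have cf : continuous f.
  apply: cont_sum => i; apply: cont_mul; apply: cont_sum => j;
  apply: cont_mul; (exact: cst_continuous || exact: coord_continuous).
have S0 : S !=set0.
  exists (delta_mx 0 0); rewrite /S /g /= (bigD1 0) //= big1.
    by rewrite !mxE eqxx mulr1 addr0.
  by move=> i /negbTE i0; rewrite !mxE i0 /= mulr0.
have cS : compact S.
  apply: (@subclosed_compact _ S
    [set v | forall i : 'I_n.+1, `[(-1 : R), 1]%classic (v ord0 i)]).
  - have -> : S = g @^-1` [set x | x = 1] by [].
    by move: cg => /continuous_closedP; apply; exact: closed_eq.
  - have := @rV_compact R n.+1 (fun=> `[(-1 : R), 1]%classic); apply => i; exact: segment_compact.
  - move=> r; rewrite /S /g /= => hr i; rewrite in_itv /= -ler_norml.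
    rewrite -(@ler_pXn2r _ 2) ?nnegrE //; rewrite expr1n real_normK ?num_real //.
    rewrite -hr (bigD1 i) //= -expr2 lerDl sumr_ge0 // => j _.
    by rewrite -expr2 sqr_ge0.
have [r rS rmax] := compact_EVT_max S0 cS (@continuous_subspaceT _ _ S f cf).
have hdot : forall x : 'cV[R]_n.+1, dot x x = g x^T.
  by move=> x; rewrite dotE /g; apply: eq_bigr => i _; rewrite !mxE.
have hf : forall x : 'cV[R]_n.+1, dot (A *m x) (A *m x) = f x^T.
  move=> x; rewrite dotE /f; apply: eq_bigr => i _; rewrite !mxE.
  by congr (_ * _); apply: eq_bigr => j _; rewrite !mxE.
exists r^T; split.
  by rewrite hdot trmxK; move: rS; rewrite inE.
move=> x hx; rewrite !hf trmxK; apply: rmax.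
by rewrite inE /S /= -hdot.
Qed.

Local Close Scope classical_set_scope.

Lemma quad_zero (R : realType) (a b : R) : (forall t, t * a + t ^+ 2 * b <= 0) -> a = 0.
Proof.
move=> H.
have := H (a / (`|b| + 1)).
have hK : 0 < `|b| + 1 by rewrite ltr_pwDr.
set K := `|b| + 1.
have hb : -b <= `|b| by rewrite -normrN ler_norm.
move=> h.
have : a ^+ 2 * (K + b) <= 0.
  have -> : a ^+ 2 * (K + b) = (a / K * a + (a / K) ^+ 2 * b) * K ^+ 2.
    field. by rewrite gt_eqF.
  by apply: mulr_le0_ge0 => //; exact: sqr_ge0.
rewrite pmulr_lle0; last by rewrite /K; lra.
by rewrite le_eqVlt sqrf_eq0 ltNge sqr_ge0 orbF => /eqP.
Qed.

Lemma dot_eq0_all (R : realType) n (d : 'cV[R]_n) : (forall y, dot d y = 0) -> d = 0.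
Proof. by move=> H; apply/eqP; rewrite -dotvv_eq0 H. Qed.

Lemma max_homog (R : realType) m n (A : 'M[R]_(m, n)) v :
  (forall x, dot x x = 1 -> dot (A *m x) (A *m x) <= dot (A *m v) (A *m v)) ->
  forall x, dot (A *m x) (A *m x) <= dot (A *m v) (A *m v) * dot x x.
Proof.
move=> H x; have [->|x0] := eqVneq x 0.
  by rewrite mulmx0 dot0l dot0l mulr0.
have hx : 0 < dot x x by rewrite lt_def dotvv_eq0 x0 dotvv_ge0.
pose c := (Num.sqrt (dot x x))^-1.
have hc2 : c ^+ 2 = (dot x x)^-1 by rewrite /c exprVn sqr_sqrtr // ltW.
have := H (c *: x); rewrite -scalemxAr !dotZl !dotZr !mulrA -expr2 hc2.
rewrite mulVf ?gt_eqF // => /(_ erefl).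
by rewrite -ler_pdivrMr // mulrC.
Qed.

Lemma eigen_of_max (R : realType) m n (A : 'M[R]_(m, n)) v :
  (forall x, dot (A *m x) (A *m x) <= dot (A *m v) (A *m v) * dot x x) ->
  dot v v = 1 ->
  A^T *m (A *m v) = dot (A *m v) (A *m v) *: v.
Proof.
move=> H v1; set l := dot (A *m v) (A *m v).
apply/eqP; rewrite -subr_eq0; apply/eqP; apply: dot_eq0_all => y.
rewrite dotBl dotZl dotC -dot_mull.
pose a := 2 * (dot (A *m v) (A *m y) - l * dot v y).
pose b := dot (A *m y) (A *m y) - l * dot y y.
suff : a = 0 by move/eqP; rewrite /a mulf_eq0 pnatr_eq0 /= subr_eq0 (dotC (A *m v)) => /eqP->; rewrite subrr.
apply: (@quad_zero _ a b) => t.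
have := H (v + t *: y).
rewrite mulmxDr -scalemxAr !dotDl !dotDr !dotZl !dotZr v1 (dotC y v)
  (dotC (A *m y) (A *m v)) -/l /a /b.
move=> h; rewrite -subr_ge0 in h; rewrite -oppr_ge0.
by apply: le_trans h _; rewrite le_eqVlt; apply/orP; left; apply/eqP; ring.
Qed.

Definition Sig (R : realType) m n (s : nat -> R) : 'M[R]_(m, n) :=
  \matrix_(i < m, j < n) (if (i : nat) == j then s i else 0).

Lemma Sig_block (R : realType) m n (s : nat -> R) :
  Sig (1 + m) (1 + n) s = block_mx (s 0%N)%:M 0 0 (Sig m n (fun k => s k.+1)).
Proof.
apply/matrixP => i j; rewrite -[i]splitK -[j]splitK.
case: (split i) => i'; case: (split j) => j' /=;
  rewrite ?block_mxEul ?block_mxEur ?block_mxEdl ?block_mxEdr !mxE /=.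
- by rewrite !ord1 /=.
- by rewrite ord1.
- by rewrite ord1.
- by rewrite eqSS.
Qed.

Lemma svd0 (R : realType) m n : @is_svd R m n 0 1%:M (fun=> 0) 1%:M.
Proof.
split; first by rewrite trmx1 mulmx1. split; first by rewrite trmx1 mulmx1. split; first by [].

rewrite trmx1 mulmx1 mul1mx; apply/matrixP => i j; rewrite !mxE.
by case: ifP.
Qed.

Lemma mx_eq0_of (R : realType) m n (A : 'M[R]_(m, n)) :
  (forall x : 'cV[R]_n, A *m x = 0) -> A = 0.
Proof.
move=> H; apply/matrixP => i j; have := H (delta_mx j 0).
by rewrite -colE => /matrixP /(_ i 0); rewrite !mxE.
Qed.

Lemma orth_sym (R : realType) n (H : 'M[R]_n) : H^T *m H = 1%:M -> H *m H^T = 1%:M.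
Proof. exact: mulmx1C. Qed.

Lemma svd_exists (R : realType) n : forall m (A : 'M[R]_(m, n)),
  exists U s V, is_svd A U s V.
Proof.
elim: n => [|n IH] m A.
  by rewrite thinmx0; exists 1%:M, (fun=> 0), 1%:M; exact: svd0.
case: m A => [|m] A.
  by rewrite flatmx0; exists 1%:M, (fun=> 0), 1%:M; exact: svd0.
have [->|An0] := eqVneq A 0.
  by exists 1%:M, (fun=> 0), 1%:M; exact: svd0.
have [v [v1 hmax]] := max_dir A.
have Hh := max_homog hmax.
have eig := eigen_of_max Hh v1.
set l := dot (A *m v) (A *m v) in Hh eig.
have l0 : 0 < l.
  rewrite lt_def dotvv_ge0 andbT dotvv_eq0; apply: contra An0 => /eqP Av0.
  apply/eqP/mx_eq0_of => x; apply/eqP; rewrite -dotvv_eq0 eq_le dotvv_ge0 andbT.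
  by have := Hh x; rewrite /l Av0 dot0l mul0r.
pose sg := Num.sqrt l.
have sg0 : 0 < sg by rewrite sqrtr_gt0.
have sg2 : sg ^+ 2 = l by rewrite sqr_sqrtr // ltW.
pose u := sg^-1 *: (A *m v).
have u1 : dot u u = 1.
  by rewrite dotZl dotZr mulrA -expr2 exprVn sg2 mulVf // gt_eqF.
pose e0 : 'cV[R]_n.+1 := delta_mx 0 0.
pose f0 : 'cV[R]_m.+1 := delta_mx 0 0.
have de : forall k (e : 'cV[R]_k.+1), e = delta_mx 0 0 -> dot e e = 1.
  move=> k e ->; rewrite dotE (bigD1 0) //= big1 ?mxE ?eqxx ?mulr1 ?addr0 //.
  by move=> i /negbTE i0; rewrite mxE i0 mul0r.
have hev : vnorm e0 = vnorm v by rewrite !vnormE v1 (de _ e0 erefl).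
have [Hv [hHv HvT Hve]] := householder hev.
have hfu : vnorm f0 = vnorm u by rewrite !vnormE u1 (de _ f0 erefl).
have [Hu [hHu HuT Huf]] := householder hfu.
pose B := Hu^T *m A *m Hv.
have hHv' : Hv *m Hv = 1%:M by rewrite -{1}HvT.
have hHu' : Hu *m Hu = 1%:M by rewrite -{1}HuT.
have hB1 : B *m e0 = sg *: f0.
  rewrite /B -mulmxA Hve -mulmxA.
  have -> : A *m v = sg *: u by rewrite /u scalerA divff ?gt_eqF // scale1r.
  by rewrite -scalemxAr HuT -Huf mulmxA hHu' mul1mx.
have hB2 : f0^T *m B = sg *: e0^T.
  rewrite /B !mulmxA -trmx_mul Huf.
  have -> : u^T *m A = (sg *: v)^T.
    rewrite -[u^T *m A]trmxK trmx_mul trmxK /u -scalemxAr eig scalerA -sg2.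
    by rewrite expr2 mulKf // gt_eqF.
  by rewrite linearZ /= -scalemxAl -Hve trmx_mul -mulmxA hHv mulmx1.
have hBent : forall i j, B i j = (B *m (delta_mx j 0 : 'cV_n.+1)) i 0.
  by move=> i j; rewrite -colE [RHS]mxE.
have hBent2 : forall i j, B i j = ((delta_mx 0 i : 'rV_m.+1) *m B) 0 j.
  by move=> i j; rewrite -rowE [RHS]mxE.
have Bblk : (B : 'M_(1 + m, 1 + n)) = block_mx sg%:M 0 0 (drsubmx (B : 'M_(1 + m, 1 + n))).
  rewrite -[LHS](@submxK _ 1 m 1 n); congr block_mx.
  - apply/matrixP => i j; rewrite !ord1 [LHS]mxE [LHS]mxE hBent.
    have -> : lshift n (0 : 'I_1) = 0 by apply/val_inj.
    have -> : lshift m (0 : 'I_1) = 0 by apply/val_inj.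
    by rewrite hB1 !mxE !eqxx mulr1.
  - apply/matrixP => i j; rewrite !ord1 [LHS]mxE [LHS]mxE hBent2.
    have -> : lshift m (0 : 'I_1) = 0 by apply/val_inj.
    by rewrite -trmx_delta hB2 !mxE /= mulr0.
  - apply/matrixP => i j; rewrite !ord1 [LHS]mxE [LHS]mxE hBent.
    have -> : lshift n (0 : 'I_1) = 0 by apply/val_inj.
    by rewrite hB1 !mxE /= mulr0.
have [U' [s' [V' [hU' [hV' [hs' hB']]]]]] := IH m (drsubmx (B : 'M_(1 + m, 1 + n))).
pose bU : 'M[R]_(1 + m) := block_mx 1%:M 0 0 U'.
pose bV : 'M[R]_(1 + n) := block_mx 1%:M 0 0 V'.
exists (Hu *m bU), (fun k => if k is k'.+1 then s' k' else sg), (Hv *m bV).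
have orthb : forall k (W : 'M[R]_k), W^T *m W = 1%:M ->
    (block_mx 1%:M 0 0 W : 'M_(1 + k))^T *m block_mx 1%:M 0 0 W = 1%:M.
  move=> k W hW; rewrite tr_block_mx mulmx_block hW trmx1 !trmx0 !mulmx0 !mul0mx.
  by rewrite !mulmx1 !addr0 add0r (scalar_mx_block 1 k 1).
split.
  by rewrite trmx_mul mulmxA -(mulmxA _ _ Hu) hHu mulmx1 orthb.
split.
  by rewrite trmx_mul mulmxA -(mulmxA _ _ Hv) hHv mulmx1 orthb.
split.
  by case => [|k] /=; [exact: ltW|exact: hs'].
have -> : A = Hu *m B *m Hv^T.
  by rewrite /B !mulmxA HuT hHu' mul1mx -mulmxA HvT hHv' mulmx1.
have -> : (\matrix_(i < m.+1, j < n.+1) (if (i : nat) == j then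
     (fun k => if k is k'.+1 then s' k' else sg) i else 0)) =
     (Sig (1 + m) (1 + n) (fun k => if k is k'.+1 then s' k' else sg)) by [].
rewrite Sig_block /= Bblk hB' /bU /bV.
rewrite trmx_mul !mulmxA.
have E : (block_mx 1%:M 0 0 U' : 'M_(1 + m)) *m block_mx sg%:M 0 0 (Sig m n s')
   *m (block_mx 1%:M 0 0 V' : 'M_(1 + n))^T =
   block_mx sg%:M 0 0 (U' *m Sig m n s' *m V'^T).
  rewrite tr_block_mx !mulmx_block trmx1 !trmx0 !mulmx0 !mul0mx !mulmx1 !mul1mx.
  by rewrite !addr0 !add0r mul0mx.
by rewrite -E !mulmxA.
Qed.

Lemma sum_at (R : realType) k (P : pred 'I_k) (h : 'I_k -> R) a :
  P a -> (forall b, P b -> b = a) ->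
  \sum_i (if P i then h i else 0) = h a.
Proof.
move=> Pa H; rewrite (bigD1 a) //= Pa big1 ?addr0 //.
move=> i /negbTE ia; case: ifP => // Pi.
by rewrite (H _ Pi) eqxx in ia.
Qed.

Lemma sum_none (R : realType) k (P : pred 'I_k) (h : 'I_k -> R) :
  (forall b, ~~ P b) -> \sum_i (if P i then h i else 0) = 0.
Proof. by move=> H; apply: big1 => i _; rewrite (negbTE (H i)). Qed.

Lemma uniq_eqj m n (i : 'I_m) (a b : 'I_n) :
  (i : nat) == a -> (i : nat) == b -> a = b.
Proof. by move=> /eqP ha /eqP hb; apply/val_inj; rewrite /= -ha -hb. Qed.

Lemma uniq_eqi m n (j : 'I_n) (a b : 'I_m) :
  (a : nat) == j -> (b : nat) == j -> a = b.
Proof. by move=> /eqP ha /eqP hb; apply/val_inj; rewrite /= ha hb. Qed.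

Lemma prod_single (R : realType) m n (i : 'I_m) (f g : 'I_n -> R) :
  (\sum_(j : 'I_n) (if (i : nat) == j then f j else 0)) *
  (\sum_(j : 'I_n) (if (i : nat) == j then g j else 0)) =
  \sum_(j : 'I_n) (if (i : nat) == j then f j * g j else 0).
Proof.
case: (pickP (fun j : 'I_n => (i : nat) == j)) => [a Pa|none].
  have H : forall b : 'I_n, (i : nat) == b -> b = a by move=> b Pb; exact: uniq_eqj Pb Pa.
  by rewrite !(sum_at _ Pa H).
by rewrite !sum_none ?mul0r // => b; rewrite none.
Qed.

Lemma sum_single_le (R : realType) m n (j : 'I_n) (c : R) : 0 <= c ->
  \sum_(i : 'I_m) (if (i : nat) == j then c else 0) <= c.
Proof.
move=> c0.
case: (pickP (fun i : 'I_m => (i : nat) == j)) => [a Pa|none].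
  have H : forall b : 'I_m, (b : nat) == j -> b = a by move=> b Pb; exact: uniq_eqi Pb Pa.
  by rewrite (sum_at (fun=> c) Pa H).
by rewrite sum_none // => b; rewrite none.
Qed.

Notation bnd c W := (forall x, vnorm (W *m x) <= c * vnorm x).

Lemma Sig_mul_entry (R : realType) m n (s : nat -> R) (y : 'cV[R]_n) (i : 'I_m) :
  (Sig m n s *m y) i 0 = \sum_(j : 'I_n) (if (i : nat) == j then s i * y j 0 else 0).
Proof.
by rewrite mxE; apply: eq_bigr => j _; rewrite mxE; case: ifP; rewrite ?mul0r.
Qed.

Lemma dot_Sig (R : realType) m n (s t : nat -> R) (y : 'cV[R]_n) :
  dot (Sig m n s *m y) (Sig m n t *m y) =
  \sum_(i : 'I_m) \sum_(j : 'I_n) (if (i : nat) == j then s i * t i * (y j 0) ^+ 2 else 0).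
Proof.
rewrite dotE; apply: eq_bigr => i _; rewrite !Sig_mul_entry prod_single.
by apply: eq_bigr => j _; case: ifP => _ //; rewrite expr2; ring.
Qed.

Lemma sum_diag_le (R : realType) m n (y : 'cV[R]_n) :
  \sum_(i : 'I_m) \sum_(j : 'I_n) (if (i : nat) == j then (y j 0) ^+ 2 else 0) <= dot y y.
Proof.
rewrite exchange_big dotE; apply: ler_sum => j _; rewrite -expr2.
exact/sum_single_le/sqr_ge0.
Qed.

Lemma dsum_min (R : realType) m n (s : nat -> R) :
  \sum_(j : 'I_n) \sum_(k : 'I_m) (if (k : nat) == j then s k else 0) =
  \sum_(i < minn m n) s i.
Proof.
have inner : forall j : 'I_n,
    \sum_(k : 'I_m) (if (k : nat) == j then s k else 0) = if (j < m)%N then s j else 0.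
  move=> j; case: ltnP => hj.
    rewrite (@sum_at _ _ _ (fun k : 'I_m => s k) (Ordinal hj)) //=.
    by move=> b hb; exact: uniq_eqi hb _.
  rewrite sum_none // => b; apply/negP => /eqP hb.
  by move: (ltn_ord b); rewrite hb ltnNge hj.
rewrite (eq_bigr _ (fun j _ => inner j)) -big_mkcond /=.
case: (leqP n m) => h.
  rewrite big_mkcond; apply: eq_bigr => j _.
  by rewrite (leq_trans (ltn_ord j) h).

by rewrite (big_ord_widen n (fun i => s i) (ltnW h)).
Qed.

Definition Ms (R : realType) m n (s : nat -> R) := \big[Num.max/0]_(i < minn m n) s i.

Lemma Ms_ge0 (R : realType) m n (s : nat -> R) : (forall i, 0 <= s i) -> 0 <= Ms m n s.
Proof.
move=> hs; rewrite /Ms; apply: (big_ind (fun x => 0 <= x)) => //.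
by move=> x y hx hy; rewrite le_max hx.
Qed.

Lemma Ms_ub (R : realType) m n (s : nat -> R) k : (k < minn m n)%N -> s k <= Ms m n s.
Proof. by move=> hk; rewrite /Ms (bigD1 (Ordinal hk)) //= le_max lexx. Qed.

Lemma Ms_cases (R : realType) m n (s : nat -> R) :
  Ms m n s = 0 \/ exists k, (k < minn m n)%N /\ Ms m n s = s k.
Proof.
rewrite /Ms; apply: (big_ind (fun x => x = 0 \/ exists k, (k < minn m n)%N /\ x = s k)).
- by left.
- move=> x y hx hy; case: (leP x y) => hxy.
    by [].
  by [].
- by move=> i _; right; exists i.
Qed.

Lemma col_dot (R : realType) m n p (A : 'M[R]_(m, n)) (B : 'M[R]_(m, p)) j k :
  dot (col j A) (col k B) = (A^T *m B) j k.
Proof. by rewrite dotE mxE; apply: eq_bigr => i _; rewrite !mxE. Qed.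

Lemma vnorm_ge_mul (R : realType) m n c (a : 'cV[R]_m) (b : 'cV[R]_n) : 0 <= c ->
  (c * vnorm b <= vnorm a) = (c ^+ 2 * dot b b <= dot a a).
Proof.
move=> c0; rewrite -(ger0_norm c0) -vnormZ vnorm_le dotZl dotZr mulrA -expr2.
by rewrite ger0_norm.
Qed.


Lemma svdE (R : realType) m n (A : 'M[R]_(m, n)) U s V : is_svd A U s V ->
  [/\ U^T *m U = 1%:M, V^T *m V = 1%:M, V *m V^T = 1%:M, (forall i, 0 <= s i) &
      A = U *m Sig m n s *m V^T].
Proof.
by move=> [hU [hV [hs hA]]]; split => //; exact: mulmx1C.
Qed.

Lemma svd_dot (R : realType) m n (A : 'M[R]_(m, n)) U s V (W : 'M[R]_(m, n)) t x :
  is_svd A U s V -> W = U *m Sig m n t *m V^T ->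
  dot (W *m x) (A *m x) = \sum_(i : 'I_m) \sum_(j : 'I_n)
     (if (i : nat) == j then t i * s i * ((V^T *m x) j 0) ^+ 2 else 0).
Proof.
move=> /svdE [hU hV hVV hs hA] ->; rewrite hA -!mulmxA dot_orth //.
by rewrite dot_Sig.
Qed.

Lemma svd_normV (R : realType) m n (A : 'M[R]_(m, n)) U s V x :
  is_svd A U s V -> dot (V^T *m x) (V^T *m x) = dot x x.
Proof. by move=> /svdE [_ _ hVV _ _]; rewrite dot_orth // trmxK. Qed.

Lemma svd_spec_ub (R : realType) m n (A : 'M[R]_(m, n)) U s V :
  is_svd A U s V -> forall x, vnorm (A *m x) <= Ms m n s * vnorm x.
Proof.
move=> h x; have [hU hV hVV hs hA] := svdE h.
rewrite vnorm_le_mul ?Ms_ge0 //.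
rewrite (svd_dot x h hA) -(svd_normV x h).
apply: (le_trans _ (ler_wpM2l (sqr_ge0 _) (sum_diag_le m (V^T *m x)))).
rewrite mulr_sumr; apply: ler_sum => i _; rewrite mulr_sumr; apply: ler_sum => j _.
case: ifP => hij; last by rewrite mulr0.
apply: ler_wpM2r; first exact: sqr_ge0.
rewrite -expr2 ler_sqr ?nnegrE ?Ms_ge0 ?hs //; apply: Ms_ub.
by rewrite leq_min ltn_ord (eqP hij) ltn_ord.
Qed.

Lemma svd_spec_att (R : realType) m n (A : 'M[R]_(m, n)) U s V :
  is_svd A U s V -> Ms m n s = 0 \/
    exists x : 'cV[R]_n, x != 0 /\ Ms m n s * vnorm x <= vnorm (A *m x).
Proof.
move=> h; have [hU hV hVV hs hA] := svdE h.
case: (Ms_cases m n s) => [->|[k [hk ->]]]; first by left.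
right; rewrite leq_min in hk; case/andP: hk => km kn.
pose e : 'cV[R]_n := delta_mx (Ordinal kn) 0.
have ee : dot e e = 1.
  rewrite dotE (bigD1 (Ordinal kn)) //= big1 ?mxE ?eqxx ?mulr1 ?addr0 //.
  by move=> i /negbTE i0; rewrite mxE i0 mul0r.
exists (V *m e); split.
  by rewrite -dotvv_eq0 dot_orth // ee oner_eq0.
rewrite vnorm_ge_mul ?hs // dot_orth // ee mulr1.
rewrite (svd_dot _ h hA) mulmxA hV mul1mx.
rewrite (bigD1 (Ordinal km)) //= (bigD1 (Ordinal kn)) //= eqxx.
rewrite !mxE eqxx /= expr1n mulr1 -expr2 -addrA lerDl addr_ge0 //.
  by apply: sumr_ge0 => j _; case: ifP => // _; rewrite mulr_ge0 ?sqr_ge0 ?mulr_ge0.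
apply: sumr_ge0 => i _; apply: sumr_ge0 => j _; case: ifP => // _.
by rewrite mulr_ge0 ?sqr_ge0 ?mulr_ge0.
Qed.

Lemma spec_unique (R : realType) m n (A : 'M[R]_(m, n)) (c1 c2 : R) :
  0 <= c1 -> 0 <= c2 ->
  (forall x, vnorm (A *m x) <= c1 * vnorm x) ->
  (forall x, vnorm (A *m x) <= c2 * vnorm x) ->
  (c1 = 0 \/ exists x : 'cV[R]_n, x != 0 /\ c1 * vnorm x <= vnorm (A *m x)) ->
  (c2 = 0 \/ exists x : 'cV[R]_n, x != 0 /\ c2 * vnorm x <= vnorm (A *m x)) ->
  c1 = c2.
Proof.
have key : forall c1 c2 : R, 0 <= c1 -> 0 <= c2 ->
  (forall x, vnorm (A *m x) <= c2 * vnorm x) ->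
  (c1 = 0 \/ exists x : 'cV[R]_n, x != 0 /\ c1 * vnorm x <= vnorm (A *m x)) ->
  c1 <= c2.
  move=> d1 d2 h1 h2 H2 [->//|[x [x0 hx]]].
  have hx0 : 0 < vnorm x by rewrite lt_def vnorm_eq0 x0 vnorm_ge0.
  by rewrite -(ler_pM2r hx0); exact: le_trans hx (H2 x).
move=> h1 h2 H1 H2 E1 E2; apply/eqP; rewrite eq_le.
by rewrite (key c1 c2) // (key c2 c1).
Qed.

Lemma specnorm_svd (R : realType) m n (A : 'M[R]_(m, n)) U s V :
  is_svd A U s V -> specnorm A = Ms m n s.
Proof.
move=> h.
rewrite /specnorm; set P := (X in xget 0 X).
have ex : exists t, P t.
  have [U' [s' [V' h']]] := svd_exists A.
  by exists (Ms m n s'), U', s', V'.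
have [U' [s' [V' [h' ->]]]] := xgetPex 0 ex.
have [_ _ _ hs _] := svdE h; have [_ _ _ hs' _] := svdE h'.
apply: (spec_unique (A := A)); rewrite ?Ms_ge0 //.
- exact: svd_spec_ub h'.
- exact: svd_spec_ub h.
- exact: svd_spec_att h'.
- exact: svd_spec_att h.
Qed.

Lemma col_unit (R : realType) m n (V : 'M[R]_(m, n)) j : V^T *m V = 1%:M -> vnorm (col j V) = 1.
Proof. by move=> hV; rewrite vnormE col_dot hV mxE eqxx sqrtr1. Qed.

Lemma svd_trace_le (R : realType) m n (A : 'M[R]_(m, n)) U s V (W : 'M[R]_(m, n)) c :
  is_svd A U s V -> 0 <= c -> bnd c W ->
  \tr (W^T *m A) <= c * \sum_(i < minn m n) s i.
Proof.
move=> h c0 hW; have [hU hV hVV hs hA] := svdE h.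
rewrite hA !mulmxA mxtrace_mulC !mulmxA -dsum_min mulr_sumr.
apply: ler_sum => j _; rewrite mxE mulr_sumr; apply: ler_sum => k _; rewrite [X in _ * X]mxE.
case: ifP => _; last by rewrite !mulr0.
rewrite mulrC [X in _ <= X]mulrC; apply: ler_wpM2l; first exact: hs.
rewrite -trmx_mul -col_dot [col j _]colE -mulmxA -colE.
apply: le_trans (CSn _ _) _.
rewrite (col_unit k hU) mulr1.
by apply: le_trans (hW _) _; rewrite (col_unit j hV) mulr1.
Qed.

Definition W0of (R : realType) m n (U : 'M[R]_m) (V : 'M[R]_n) : 'M[R]_(m, n) :=
  U *m Sig m n (fun=> 1) *m V^T.

Lemma svd_W0 (R : realType) m n (A : 'M[R]_(m, n)) U s V :
  is_svd A U s V ->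
  [/\ bnd 1 (W0of U V), \tr ((W0of U V)^T *m A) = \sum_(i < minn m n) s i,
      forall x, 0 <= dot (W0of U V *m x) (A *m x) &
      forall x, dot (A *m x) (A *m x) <= Ms m n s * dot (W0of U V *m x) (A *m x)].
Proof.
move=> h; have [hU hV hVV hs hA] := svdE h.
have hdot := fun x => svd_dot x h (erefl (W0of U V)).
have hAA := fun x => svd_dot x h hA.
split.
- move=> x; rewrite mul1r vnorm_le /W0of -!mulmxA dot_orth // dot_Sig.
  rewrite -(svd_normV x h); apply: le_trans (sum_diag_le m _).
  apply: ler_sum => i _; apply: ler_sum => j _; case: ifP => // _.
  by rewrite !mul1r.
- rewrite hA /W0of !trmx_mul trmxK !mulmxA -(mulmxA _ U^T U) hU mulmx1.
  rewrite mxtrace_mulC !mulmxA hV mul1mx -dsum_min.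
  apply: eq_bigr => j _; rewrite mxE; apply: eq_bigr => k _; rewrite !mxE.
  by case: ifP => _; rewrite ?mul1r ?mul0r.
- move=> x; rewrite hdot; apply: sumr_ge0 => i _; apply: sumr_ge0 => j _.
  by case: ifP => // _; rewrite mul1r mulr_ge0 ?sqr_ge0.
- move=> x; rewrite hdot hAA mulr_sumr; apply: ler_sum => i _.
  rewrite mulr_sumr; apply: ler_sum => j _; case: ifP => hij; last by rewrite mulr0.
  rewrite mul1r mulrA; apply: ler_wpM2r; first exact: sqr_ge0.
  apply: ler_wpM2r; first exact: hs.
  apply: Ms_ub; by rewrite leq_min ltn_ord (eqP hij) ltn_ord.
Qed.

Lemma nucnorm_svd (R : realType) m n (A : 'M[R]_(m, n)) U s V :
  is_svd A U s V -> nucnorm A = \sum_(i < minn m n) s i.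
Proof.
move=> h.
rewrite /nucnorm; set P := (X in xget 0 X).
have ex : exists t, P t.
  have [U' [s' [V' h']]] := svd_exists A.
  by exists (\sum_(i < minn m n) s' i), U', s', V'.
have [U' [s' [V' [h' ->]]]] := xgetPex 0 ex.
have [b1 t1 _ _] := svd_W0 h; have [b2 t2 _ _] := svd_W0 h'.
apply/eqP; rewrite eq_le; apply/andP; split.
  by rewrite -t2; have := svd_trace_le h ler01 b2; rewrite mul1r.
by rewrite -t1; have := svd_trace_le h' ler01 b1; rewrite mul1r.
Qed.

Lemma nuc_dual (R : realType) m n (A W : 'M[R]_(m, n)) c :
  0 <= c -> bnd c W -> \tr (W^T *m A) <= c * nucnorm A.
Proof.
move=> c0 hW; have [U [s [V h]]] := svd_exists A.
by rewrite (nucnorm_svd h); exact: svd_trace_le h c0 hW.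
Qed.

Lemma nuc_attain (R : realType) m n (A : 'M[R]_(m, n)) : exists W : 'M[R]_(m, n),
  [/\ bnd 1 W, \tr (W^T *m A) = nucnorm A,
      forall x, 0 <= dot (W *m x) (A *m x) &
      forall x, dot (A *m x) (A *m x) <= specnorm A * dot (W *m x) (A *m x)].
Proof.
have [U [s [V h]]] := svd_exists A.
have [b1 t1 p1 p2] := svd_W0 h.
by exists (W0of U V); rewrite (nucnorm_svd h) (specnorm_svd h).
Qed.

Lemma spec_ge0 (R : realType) m n (A : 'M[R]_(m, n)) : 0 <= specnorm A.
Proof.
have [U [s [V h]]] := svd_exists A.
have [_ _ _ hs _] := svdE h.
by rewrite (specnorm_svd h) Ms_ge0.
Qed.

Lemma spec_bound (R : realType) m n (A : 'M[R]_(m, n)) (x : 'cV[R]_n) :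
  vnorm (A *m x) <= specnorm A * vnorm x.
Proof.
have [U [s [V h]]] := svd_exists A.
rewrite (specnorm_svd h). exact: (svd_spec_ub h x).
Qed.

Lemma spec_le (R : realType) m n (A : 'M[R]_(m, n)) c : 0 <= c ->
  (forall x, vnorm (A *m x) <= c * vnorm x) -> specnorm A <= c.
Proof.
move=> c0 H; have [U [s [V h]]] := svd_exists A.
rewrite (specnorm_svd h); case: (svd_spec_att h) => [->//|[x [x0 hx]]].
have hx0 : 0 < vnorm x by rewrite lt_def vnorm_eq0 x0 vnorm_ge0.
by rewrite -(ler_pM2r hx0); exact: le_trans hx (H x).
Qed.

Lemma spec_gt0 (R : realType) m n (A : 'M[R]_(m, n)) : A != 0 -> 0 < specnorm A.
Proof.
move=> A0; rewrite lt_def spec_ge0 andbT; apply: contra A0 => /eqP s0.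
apply/eqP/mx_eq0_of => x; apply/eqP; rewrite -vnorm_eq0 eq_le vnorm_ge0 andbT.
by have := spec_bound A x; rewrite s0 mul0r.
Qed.

Lemma nuc_mulr (R : realType) m n k (A : 'M[R]_(m, n)) (P : 'M[R]_(n, k)) c :
  0 <= c -> bnd c P^T -> nucnorm (A *m P) <= c * nucnorm A.
Proof.
move=> c0 hP; have [W [hW tW _ _]] := nuc_attain (A *m P).
rewrite -tW mulmxA mxtrace_mulC mulmxA.
have -> : P *m W^T = (W *m P^T)^T by rewrite trmx_mul trmxK.
apply: nuc_dual => // x; rewrite -mulmxA; apply: le_trans (hW _) _.
by rewrite mul1r.
Qed.

Lemma nuc_triangle (R : realType) m n (A B : 'M[R]_(m, n)) :
  nucnorm (A + B) <= nucnorm A + nucnorm B.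
Proof.
have [W [hW tW _ _]] := nuc_attain (A + B).
rewrite -tW mulmxDr mxtraceD.
by apply: lerD; rewrite -[nucnorm _]mul1r; apply: nuc_dual.
Qed.

Lemma spec_mulr (R : realType) m n k (A : 'M[R]_(m, n)) (P : 'M[R]_(n, k)) c :
  0 <= c -> bnd c P -> specnorm (A *m P) <= specnorm A * c.
Proof.
move=> c0 hP; apply: spec_le; first by rewrite mulr_ge0 // spec_ge0.
move=> x; rewrite -mulmxA; apply: le_trans (spec_bound _ _) _.
by rewrite -mulrA ler_wpM2l // spec_ge0.
Qed.

Lemma orth_bnd (R : realType) n (P : 'M[R]_n) : P^T *m P = 1%:M -> bnd 1 P.
Proof. by move=> hP x; rewrite vnorm_orth // mul1r. Qed.

Lemma orth_inv (R : realType) m n (N : 'M[R]_(m, n)) (P : 'M[R]_n) :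
  P^T *m P = 1%:M ->
  nucnorm (N *m P) = nucnorm N /\ specnorm (N *m P) = specnorm N.
Proof.
move=> hP; have hP' : P *m P^T = 1%:M by exact: mulmx1C.
have hPT : P^T^T *m P^T = 1%:M by rewrite trmxK.
have eN : N = N *m P *m P^T by rewrite -mulmxA hP' mulmx1.
split; apply/eqP; rewrite eq_le; apply/andP; split.
- by rewrite -[nucnorm N]mul1r; apply: nuc_mulr => //; exact: orth_bnd.
- rewrite {1}eN -[nucnorm (N *m P)]mul1r; apply: nuc_mulr => //.
  by rewrite trmxK; exact: orth_bnd.
- by rewrite -[specnorm N]mulr1; apply: spec_mulr => //; exact: orth_bnd.
- by rewrite {1}eN -[specnorm (N *m P)]mulr1; apply: spec_mulr => //; exact: orth_bnd.
Qed.

Lemma contr_bnd (R : realType) n (f : 'cV[R]_n) (al : R) : dot f f = 1 ->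
  0 <= al <= 1 -> bnd 1 (1%:M - al *: (f *m f^T)).
Proof.
move=> ff /andP[a0 a1] x; rewrite mul1r vnorm_le mulmxBl mul1mx -scalemxAl -mulmxA.
rewrite trmx_dot mul_mx_scalar scalerA !dotBl !dotBr !dotZl !dotZr ff (dotC x f).
set y := dot f x.
have H : 0 <= al * (2 - al) * y ^+ 2.
  apply: mulr_ge0; last exact: sqr_ge0.
  by apply: mulr_ge0 => //; lra.
 rewrite -subr_ge0; apply: le_trans H _; rewrite le_eqVlt; apply/orP; left.
apply/eqP; ring.
Qed.

Definition Mt (R : realType) d N (B0 : 'M[R]_(d, N)) (v : 'cV[R]_d) (f : 'cV[R]_N) (t : R)
  : 'M[R]_(d, N) := B0 + t *: (v *m f^T).

Lemma Mt_f (R : realType) d N (B0 : 'M[R]_(d, N)) v (f : 'cV[R]_N) t :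
  dot f f = 1 -> B0 *m f = 0 -> Mt B0 v f t *m f = t *: v.
Proof.
move=> ff Bf; rewrite /Mt mulmxDl Bf add0r -scalemxAl -mulmxA trmx_dot ff.
by rewrite mul_mx_scalar scale1r.
Qed.

Lemma Mt_contr (R : realType) d N (B0 : 'M[R]_(d, N)) v (f : 'cV[R]_N) s t :
  dot f f = 1 -> B0 *m f = 0 -> 0 < t ->
  Mt B0 v f s = Mt B0 v f t *m (1%:M - (1 - s / t) *: (f *m f^T)).
Proof.
move=> ff Bf t0; rewrite mulmxBr mulmx1 -scalemxAr mulmxA (Mt_f _ _ ff Bf).
rewrite /Mt -scalemxAl scalerA -addrA; congr (_ + _).
rewrite -scalerBl; congr (_ *: _); field; by rewrite gt_eqF.
Qed.

Lemma contr_sym (R : realType) n (f : 'cV[R]_n) al :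
  (1%:M - al *: (f *m f^T))^T = 1%:M - al *: (f *m f^T).
Proof. by rewrite linearB /= trmx1 linearZ /= trmx_mul trmxK. Qed.

Lemma Mt_mono (R : realType) d N (B0 : 'M[R]_(d, N)) v (f : 'cV[R]_N) s t :
  dot f f = 1 -> B0 *m f = 0 -> 0 <= s -> s <= t ->
  nucnorm (Mt B0 v f s) <= nucnorm (Mt B0 v f t) /\
  specnorm (Mt B0 v f s) <= specnorm (Mt B0 v f t).
Proof.
move=> ff Bf s0 st; have [t0|] := eqVneq t 0.
  have -> : s = t by apply/eqP; rewrite eq_le st t0 s0.
  by [].
move=> tn0; have tp : 0 < t by rewrite lt_def tn0 (le_trans s0 st).
have hal : 0 <= 1 - s / t <= 1.
  apply/andP; split.
    by rewrite subr_ge0 ler_pdivrMr // mul1r.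
  by rewrite lerBlDr lerDl divr_ge0 // ltW.
rewrite (Mt_contr _ _ ff Bf tp); split.
  rewrite -[nucnorm (Mt _ _ _ t)]mul1r; apply: nuc_mulr => //.
  by rewrite contr_sym; exact: contr_bnd.
rewrite -[specnorm (Mt _ _ _ t)]mulr1; apply: spec_mulr => //.
exact: contr_bnd.
Qed.

Lemma tr_rank1 (R : realType) d N (W : 'M[R]_(d, N)) (v : 'cV[R]_d) (f : 'cV[R]_N) :
  \tr (W^T *m (v *m f^T)) = dot (W *m f) v.
Proof.
rewrite mulmxA mxtrace_mulC mulmxA -trmx_mul /dot.
by rewrite /mxtrace big_ord1.
Qed.

Lemma Mt_step (R : realType) d N (B0 : 'M[R]_(d, N)) v (f : 'cV[R]_N) s t S :
  dot f f = 1 -> B0 *m f = 0 -> 0 <= s -> s <= t ->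
  specnorm (Mt B0 v f s) <= S -> 0 < S ->
  (t - s) * s * dot v v / S <= nucnorm (Mt B0 v f t) - nucnorm (Mt B0 v f s).
Proof.
move=> ff Bf s0 st hS S0.
have [->|sn0] := eqVneq s 0.
  rewrite mulr0 mul0r mul0r subr_ge0.
  by case: (Mt_mono v ff Bf (lexx 0) (le_trans s0 st)).
have sp : 0 < s by rewrite lt_def sn0 s0.
have [W [hW tW p1 p2]] := nuc_attain (Mt B0 v f s).
have E : Mt B0 v f t = Mt B0 v f s + (t - s) *: (v *m f^T).
  by rewrite /Mt -addrA -scalerDl; congr (_ + _ *: _); ring.
have H1 : nucnorm (Mt B0 v f s) + (t - s) * dot (W *m f) v <= nucnorm (Mt B0 v f t).
  rewrite -tW -tr_rank1 -mxtraceZ -mxtraceD -linearZ /= -mulmxDr -E.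
  by rewrite -[nucnorm (Mt _ _ _ t)]mul1r; apply: nuc_dual.
have H2 : s * dot v v / S <= dot (W *m f) v.
  have := p2 f; rewrite (Mt_f _ _ ff Bf) dotZl dotZr dotZr.
  have q0 := p1 f; rewrite (Mt_f _ _ ff Bf) dotZr in q0.
  move=> h3.
  have h4 : s * (s * dot v v) <= S * (s * dot (W *m f) v).
    apply: le_trans h3 _; apply: ler_wpM2r => //.
  rewrite ler_pdivrMr // -(ler_pM2l sp); apply: le_trans h4 _.
  by rewrite le_eqVlt; apply/orP; left; apply/eqP; ring.
rewrite lerBrDl; apply: le_trans H1; rewrite lerD2l -!mulrA ler_wpM2l ?subr_ge0 //.
by rewrite mulrA.
Qed.

Lemma Mt_integral (R : realType) d N (B0 : 'M[R]_(d, N)) v (f : 'cV[R]_N) t0 t1 S eta :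
  dot f f = 1 -> B0 *m f = 0 -> 0 <= t0 -> t0 <= t1 ->
  specnorm (Mt B0 v f t1) <= S -> 0 < S -> 0 < eta ->
  (t1 ^+ 2 - t0 ^+ 2) * dot v v / (2 * S) - eta <=
  nucnorm (Mt B0 v f t1) - nucnorm (Mt B0 v f t0).
Proof.
move=> ff Bf t00 t01 hS S0 eta0.
pose c := dot v v / S.
have c0 : 0 <= c by rewrite divr_ge0 ?dotvv_ge0 // ltW.
pose G t := nucnorm (Mt B0 v f t) - c * t ^+ 2 / 2.
have step : forall s t, 0 <= s -> s <= t -> t <= t1 ->
    - (c * (t - s) ^+ 2 / 2) <= G t - G s.
  move=> s t s0 st tt1.
  have hs : specnorm (Mt B0 v f s) <= S.
    apply: le_trans hS; case: (Mt_mono v ff Bf s0 (le_trans st tt1)) => _ //.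
  have := Mt_step (v := v) (t := t) ff Bf s0 st hs S0.
  rewrite /G /c => H.
  have E : nucnorm (Mt B0 v f t) - c * t ^+ 2 / 2 - (nucnorm (Mt B0 v f s) - c * s ^+ 2 / 2)
     = (nucnorm (Mt B0 v f t) - nucnorm (Mt B0 v f s)) - c * (t ^+ 2 - s ^+ 2) / 2 by ring.
  rewrite /c in E; rewrite E; apply: le_trans (lerB H (lexx _)).
  rewrite le_eqVlt; apply/orP; left; apply/eqP; field; by rewrite gt_eqF.
pose Nn := (Num.Def.archi_bound (c * (t1 - t0) ^+ 2 / (2 * eta))).+1.
have Nn0 : (0 < Nn)%N by [].
pose h := (t1 - t0) / Nn%:R.
have Nr0 : 0 < (Nn%:R : R) by rewrite ltr0n.
have h0 : 0 <= h by rewrite divr_ge0 ?subr_ge0 // ltW.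
have ind : forall k, (k <= Nn)%N -> - (k%:R * (c * h ^+ 2 / 2)) <= G (t0 + k%:R * h) - G t0.
  elim => [|k IH] hk.
    by rewrite mul0r oppr0 mul0r addr0 subrr.
  have hk' : (k <= Nn)%N by apply: ltnW.
  have hkt1 : t0 + k.+1%:R * h <= t1.
    have : k.+1%:R * h <= Nn%:R * h by apply: ler_wpM2r => //; rewrite ler_nat.
    have E : Nn%:R * h = t1 - t0 by rewrite /h; field; rewrite gt_eqF.
    rewrite E => H; lra.
  have := step (t0 + k%:R * h) (t0 + k.+1%:R * h).
  have hkk : t0 + k%:R * h <= t0 + k.+1%:R * h by rewrite lerD2l ler_wpM2r // ler_nat.
  move=> /(_ (addr_ge0 t00 (mulr_ge0 (ler0n _ _) h0)) hkk hkt1).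
  have -> : t0 + k.+1%:R * h - (t0 + k%:R * h) = h by rewrite -natr1; ring.
  move=> H; have := lerD H (IH hk').
  have -> : G (t0 + k.+1%:R * h) - G t0 =
    (G (t0 + k.+1%:R * h) - G (t0 + k%:R * h)) + (G (t0 + k%:R * h) - G t0) by ring.
  move=> H2; apply: le_trans H2; rewrite le_eqVlt; apply/orP; left; apply/eqP.
  by rewrite -natr1; ring.
have := ind Nn (leqnn _).
have -> : t0 + Nn%:R * h = t1.
  have E : Nn%:R * h = t1 - t0 by rewrite /h; field; rewrite gt_eqF.
  by rewrite E; ring.
rewrite /G => H.
have hN : c * (t1 - t0) ^+ 2 / (2 * eta) < Nn%:R.
  apply: lt_le_trans (archi_boundP _) _.
    by apply: divr_ge0; [apply: mulr_ge0 => //; exact: sqr_ge0 | rewrite mulr_ge0 // ltW].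
  by rewrite ler_nat.
have he : Nn%:R * (c * h ^+ 2 / 2) <= eta.
  rewrite /h; have -> : Nn%:R * (c * ((t1 - t0) / Nn%:R) ^+ 2 / 2) =
    c * (t1 - t0) ^+ 2 / (2 * Nn%:R) by field; rewrite gt_eqF.
  rewrite ler_pdivrMr ?mulr_gt0 //; rewrite ltr_pdivrMr ?mulr_gt0 // in hN.
  apply: ltW; apply: lt_le_trans hN _; rewrite le_eqVlt; apply/orP; left; apply/eqP; ring.
have E2 : (t1 ^+ 2 - t0 ^+ 2) * dot v v / (2 * S) = c * t1 ^+ 2 / 2 - c * t0 ^+ 2 / 2.
  by rewrite /c; field; rewrite gt_eqF.
rewrite E2; lra.
Qed.

Lemma dot_col_mx (R : realType) m n (x x' : 'cV[R]_m) (y y' : 'cV[R]_n) :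
  dot (col_mx x y) (col_mx x' y') = dot x x' + dot y y'.
Proof. by rewrite /dot tr_col_mx mul_row_col mxE. Qed.

Lemma key_lemma (R : realType) d p q (A : 'M[R]_(d, p)) (v : 'cV[R]_d) (a b : 'cV[R]_q) eta :
  (0 < q)%N -> vnorm b <= vnorm a -> row_mx A (v *m a^T) != 0 -> 0 < eta ->
  (dot a a - dot b b) * dot v v / (2 * specnorm (row_mx A (v *m a^T))) - eta <=
  nucnorm (row_mx A (v *m a^T)) - nucnorm (row_mx A (v *m b^T)).
Proof.
move=> q0 hba M0 eta0.
pose e : 'cV[R]_q := delta_mx (Ordinal q0) 0.
have ee : dot e e = 1.
  rewrite dotE (bigD1 (Ordinal q0)) //= big1 ?mxE ?eqxx ?mulr1 ?addr0 //.
  by move=> i /negbTE i0; rewrite mxE i0 mul0r.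
pose f : 'cV[R]_(p + q) := col_mx 0 e.
have ff : dot f f = 1 by rewrite dot_col_mx dot0l add0r.
pose B0 : 'M[R]_(d, p + q) := row_mx A 0.
have Bf : B0 *m f = 0 by rewrite /B0 /f mul_row_col mulmx0 mul0mx addr0.
have Mrow : forall t, Mt B0 v f t = row_mx A (v *m (t *: e)^T).
  move=> t; rewrite /Mt /B0 /f tr_col_mx trmx0 mul_mx_row mulmx0 scale_row_mx scaler0.
  by rewrite add_row_mx addr0 add0r linearZ /= scalemxAr.
have inv : forall c : 'cV[R]_q, nucnorm (row_mx A (v *m c^T)) = nucnorm (Mt B0 v f (vnorm c)) /\
    specnorm (row_mx A (v *m c^T)) = specnorm (Mt B0 v f (vnorm c)).
  move=> c.
  have hce : vnorm c = vnorm (vnorm c *: e).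
    by rewrite vnormZ ger0_norm ?vnorm_ge0 // [vnorm e]vnormE ee sqrtr1 mulr1.
  have [Q [hQ QT Qc]] := householder hce.
  pose P : 'M[R]_(p + q) := block_mx 1%:M 0 0 Q.
  have hP : P^T *m P = 1%:M.
    rewrite /P tr_block_mx mulmx_block hQ trmx1 !trmx0 !mulmx0 !mul0mx !mulmx1 !addr0 add0r.
    by rewrite -scalar_mx_block.
  have EP : row_mx A (v *m c^T) *m P = Mt B0 v f (vnorm c).
    rewrite Mrow /P mul_row_block !mulmx0 addr0 mulmx1 add0r -mulmxA.
    by rewrite -QT -trmx_mul Qc.
  by have [<- <-] := orth_inv (row_mx A (v *m c^T)) hP; rewrite EP.
have [na sa] := inv a; have [nb _] := inv b.
rewrite na nb sa.
have Sp : 0 < specnorm (Mt B0 v f (vnorm a)) by rewrite -sa spec_gt0.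
have := Mt_integral (v := v) (S := specnorm (Mt B0 v f (vnorm a))) ff Bf (vnorm_ge0 b) hba (lexx _) Sp eta0.
by rewrite !vnorm2.
Qed.

Lemma Diag_col (R : realType) p q (a : 'cV[R]_p) (b : 'cV[R]_q) :
  Diag (col_mx a b) = block_mx (Diag a) 0 0 (Diag b).
Proof. by rewrite /Diag tr_col_mx diag_mx_row. Qed.

Lemma Diag_sym (R : realType) n (z : 'cV[R]_n) : (Diag z)^T = Diag z.
Proof. by rewrite /Diag tr_diag_mx. Qed.

Lemma Diag_vec (R : realType) n (z x : 'cV[R]_n) i : (Diag z *m x) i 0 = z i 0 * x i 0.
Proof. by rewrite /Diag mul_diag_mx !mxE. Qed.

Lemma ones_Diag (R : realType) n (z : 'cV[R]_n) : (ones R n)^T *m Diag z = z^T.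
Proof. by apply/matrixP => i j; rewrite /Diag mul_mx_diag !mxE mul1r !ord1. Qed.

Lemma Diag_const (R : realType) n (c : R) : Diag (c *: ones R n) = c%:M.
Proof.
rewrite /Diag /ones -diag_const_mx; congr diag_mx.
by apply/matrixP => i j; rewrite !mxE mulr1.
Qed.

Lemma bnd_Diag (R : realType) n (z : 'cV[R]_n) : bnd (vnorm z) (Diag z).
Proof.
move=> x; rewrite vnorm_le_mul ?vnorm_ge0 // vnorm2 !dotE mulr_sumr.
apply: ler_sum => i _; rewrite !Diag_vec.
have -> : z i 0 * x i 0 * (z i 0 * x i 0) = (z i 0 * z i 0) * (x i 0 * x i 0) by ring.
apply: ler_wpM2r; first by rewrite -expr2 sqr_ge0.
rewrite (bigD1 i) //= lerDl sumr_ge0 // => j _.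
by rewrite -expr2 sqr_ge0.
Qed.

Lemma bnd_col0 (R : realType) p n (D : 'M[R]_n) c : bnd c D -> bnd c (col_mx (0 : 'M[R]_(p, n)) D).
Proof.
move=> hD x; rewrite mul_col_mx mul0mx; apply: le_trans (hD x).
by rewrite vnorm_le dot_col_mx dot0l add0r.
Qed.

Lemma XDiag (R : realType) d p q (Xh : 'M[R]_(d, p)) (Xt : 'M[R]_(d, q)) zh zt :
  row_mx Xh Xt *m Diag (col_mx zh zt) = row_mx (Xh *m Diag zh) (Xt *m Diag zt).
Proof.
by rewrite Diag_col mul_row_block !mulmx0 addr0 add0r.
Qed.

Lemma dot_ones (R : realType) n (y : 'cV[R]_n) : dot (ones R n) y = \sum_j y j 0.
Proof. by rewrite dotE; apply: eq_bigr => j _; rewrite mxE mul1r. Qed.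

Lemma dot_ones1 (R : realType) n : dot (ones R n) (ones R n) = n%:R.
Proof.
rewrite dot_ones (eq_bigr (fun=> 1)) ?sumr_const ?card_ord // => j _.
by rewrite mxE.
Qed.

Lemma loss_lemma (R : realType) n (r u : 'cV[R]_n) c :
  dot r u <= c -> - c <= 2^-1 * vnorm (r - u) ^+ 2 - 2^-1 * vnorm r ^+ 2.
Proof.
move=> h; have h2 := dotvv_ge0 u.
rewrite !vnorm2 dotBl !dotBr (dotC u r); lra.
Qed.

Unset Implicit Arguments.

Theorem theorem1 (R : realType) (d p q : nat)
  (x : 'cV[R]_d) (Xh : 'M[R]_(d, p)) (Xt : 'M[R]_(d, q))
  (wh : 'cV[R]_p) (wt : 'cV[R]_q) (zh : 'cV[R]_p) (zt : 'cV[R]_q)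
  (a1 a2 eps : R) (ystar : 'cV[R]_q) :
  (0 < q)%N ->
  0 < a1 -> 0 <= a2 -> 0 <= eps ->
  let X : 'M[R]_(d, p + q) := row_mx Xh Xt in
  let w : 'cV[R]_(p + q) := col_mx wh wt in
  let xbar0 : 'cV[R]_d := (q%:R)^-1 *: (Xt *m ones R q) in
  let zbar : R := (\sum_j zt j 0) / q%:R in
  let wbar : R := (\sum_j wt j 0) / q%:R in
  let E : 'M[R]_(d, q) := Xt - xbar0 *m (ones R q)^T in
  nucnorm E <= eps -> fronorm E <= eps -> specnorm E <= eps ->
  vnorm (wt - wbar *: ones R q) <= eps ->
  (* ystar is the optimal solution of min ||y - wt||^2 s.t. y^T 1 = q * zbar *)
  (\sum_j ystar j 0 = q%:R * zbar) ->
  (forall y : 'cV[R]_q, \sum_j y j 0 = q%:R * zbar ->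
      vnorm (ystar - wt) ^+ 2 <= vnorm (y - wt) ^+ 2) ->
  xbar0 != 0 ->
  let M : 'M[R]_(d, p + q) := row_mx (Xh *m Diag zh) (xbar0 *m zt^T) in
  M != 0 ->
  let gamma : R :=
    ((a1 + vnorm (x - Xh *m zh - Xt *m (zbar *: ones R q))) * vnorm zt
      + a1 * `|zbar|) * eps in
  let delta : R :=
    Num.sqrt ((2 * gamma
               - a2 * \sum_j (ystar j 0 - zbar) * (ystar j 0 + zbar - 2 * wt j 0))
              * specnorm M / (a1 * vnorm xbar0 ^+ 2)) in
  vnorm (zt - zbar *: ones R q) > delta ->
  fobj x X w a1 a2 (col_mx zh zt) > fobj x X w a1 a2 (col_mx zh (zbar *: ones R q)).
Proof.
move=> q0 a1p a2p eps0 X w xbar0 zbar wbar E hnuc hfro hspec hw hsum hopt hx0 M hM gamma delta hD.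
rewrite /delta /gamma in hD; clear delta gamma.
set one := ones R q in hD *.
set zb := zbar *: one in hD *.
set dd := zt - zb in hD *.
set r := x - Xh *m zh - Xt *m zb in hD *.
have qr0 : (q%:R : R) != 0 by rewrite pnatr_eq0 -lt0n.
have hsumzt : \sum_j zt j 0 = q%:R * zbar by rewrite /zbar mulrC divfK.
have hd1 : dot one dd = 0.
  by rewrite /dd dotBr dot_ones hsumzt /zb dotZr dot_ones1; ring.
have hXt : Xt = E + xbar0 *m one^T by rewrite /E subrK.
have hXd : Xt *m dd = E *m dd.
  by rewrite {1}hXt mulmxDl -mulmxA trmx_dot hd1 mul_mx_scalar scale0r addr0.
have hzt : dot zt zt = dot dd dd + dot zb zb.
  rewrite /dd /zb dotBl !dotBr !dotZl !dotZr dot_ones1 (dotC zt one) (dotC one zt).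
  rewrite (dotC zt one) dot_ones hsumzt; ring.
have hdz : vnorm dd <= vnorm zt by rewrite vnorm_le hzt lerDl dotvv_ge0.
have hzbzt : vnorm zb <= vnorm zt by rewrite vnorm_le hzt lerDr dotvv_ge0.
have eXz : x - X *m col_mx zh zt = r - E *m dd.
  rewrite /X mul_row_col /r -hXd /dd mulmxBr.
  by rewrite opprB addrA subrK opprD addrA.
have eXz0 : x - X *m col_mx zh zb = r by rewrite /X mul_row_col /r opprD addrA.
have loss : - (vnorm r * (eps * vnorm zt)) <=
    2^-1 * vnorm (r - E *m dd) ^+ 2 - 2^-1 * vnorm r ^+ 2.
  have h1 : dot r (E *m dd) <= vnorm r * (eps * vnorm zt).
    apply: le_trans (CSn _ _) _; apply: ler_wpM2l; first exact: vnorm_ge0.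
    apply: le_trans (spec_bound _ _) _.
    apply: le_trans (ler_wpM2r (vnorm_ge0 _) hspec) _.
    exact: ler_wpM2l.
  exact: loss_lemma.
have hXD : X *m Diag (col_mx zh zt) = M + E *m row_mx 0 (Diag zt).
  rewrite /X XDiag /M mul_mx_row mulmx0 add_row_mx addr0; congr row_mx.
  by rewrite hXt mulmxDl -mulmxA ones_Diag addrC.
have hXD0 : X *m Diag (col_mx zh zb) =
    row_mx (Xh *m Diag zh) (xbar0 *m zb^T) + E *m row_mx 0 (zbar%:M).
  rewrite /X XDiag mul_mx_row mulmx0 add_row_mx addr0; congr row_mx.
  by rewrite /zb Diag_const !mul_mx_scalar hXt scalerDr linearZ /= scalemxAr addrC.
have hn1 : nucnorm M - vnorm zt * eps <= nucnorm (X *m Diag (col_mx zh zt)).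
  have eM : M = X *m Diag (col_mx zh zt) + E *m row_mx 0 (- Diag zt).
    by rewrite hXD -addrA -mulmxDr add_row_mx addr0 subrr row_mx0 mulmx0 addr0.
  have hb0 : bnd (vnorm zt) (row_mx (0 : 'M[R]_(q, p)) (- Diag zt))^T.
    rewrite tr_row_mx trmx0 linearN /= Diag_sym; apply: bnd_col0 => y.
    by rewrite mulNmx vnormN; exact: bnd_Diag.
  have hb : nucnorm (E *m row_mx (0 : 'M[R]_(q, p)) (- Diag zt)) <= vnorm zt * eps.
    apply: le_trans (nuc_mulr E (vnorm_ge0 zt) hb0) _.
    by apply: ler_wpM2l; [exact: vnorm_ge0 | exact: hnuc].
  rewrite lerBlDr {1}eM; apply: le_trans (nuc_triangle _ _) _.
  exact: lerD (lexx _) hb.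
have hn0 : nucnorm (X *m Diag (col_mx zh zb)) <=
    nucnorm (row_mx (Xh *m Diag zh) (xbar0 *m zb^T)) + `|zbar| * eps.
  rewrite hXD0; apply: le_trans (nuc_triangle _ _) _; apply: lerD (lexx _) _.
  have hb0 : bnd `|zbar| (row_mx (0 : 'M[R]_(q, p)) (zbar%:M))^T.
    rewrite tr_row_mx trmx0 tr_scalar_mx; apply: bnd_col0 => y.
    by rewrite mul_scalar_mx vnormZ.
  apply: le_trans (nuc_mulr E (normr_ge0 zbar) hb0) _.
  by apply: ler_wpM2l; [exact: normr_ge0 | exact: hnuc].
have S0 : 0 < specnorm M by apply: spec_gt0.
have v0 : 0 < dot xbar0 xbar0 by rewrite lt_def dotvv_eq0 hx0 dotvv_ge0.
set SS := \sum_j (ystar j 0 - zbar) * (ystar j 0 + zbar - 2 * wt j 0) in hD *.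
have hSS : dot (ystar - wt) (ystar - wt) - dot (zb - wt) (zb - wt) = SS.
  rewrite /SS !dotE -sumrB; apply: eq_bigr => j _; rewrite !mxE mulr1; ring.
have hreg : dot (ystar - wt) (ystar - wt) <= dot (zt - wt) (zt - wt).
  by have := hopt zt hsumzt; rewrite !vnorm2.
have ezw : col_mx zh zt - w = col_mx (zh - wh) (zt - wt) by rewrite /w opp_col_mx add_col_mx.
have ezw0 : col_mx zh zb - w = col_mx (zh - wh) (zb - wt) by rewrite /w opp_col_mx add_col_mx.
have hdpos : 0 < dot dd dd.
  rewrite -vnorm2 exprn_gt0 //; apply: le_lt_trans hD; exact: sqrtr_ge0.
set G := ((a1 + vnorm r) * vnorm zt + a1 * `|zbar|) * eps in hD *.
have hDY : (2 * G - a2 * SS) * specnorm M / (a1 * dot xbar0 xbar0) < dot dd dd.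
  by move: hD; rewrite [vnorm dd]vnormE ltr_sqrt // vnorm2.
set K := a1 * (dot dd dd * dot xbar0 xbar0 / (2 * specnorm M)) - G + a2 * SS / 2.
have K0 : 0 < K.
  rewrite ltr_pdivrMr ?mulr_gt0 // in hDY.
  have -> : K = (dot dd dd * (a1 * dot xbar0 xbar0) - (2 * G - a2 * SS) * specnorm M)
      / (2 * specnorm M).
    by rewrite /K; field; rewrite gt_eqF.
  by rewrite divr_gt0 ?mulr_gt0 // subr_gt0.
pose eta := K / (2 * a1).
have eta0 : 0 < eta by rewrite divr_gt0 ?mulr_gt0.
have hk := key_lemma (A := Xh *m Diag zh) (v := xbar0) (a := zt) (b := zb) q0 hzbzt hM eta0.
rewrite hzt addrK in hk.
have heta : a1 * eta = K / 2 by rewrite /eta; field; rewrite gt_eqF.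
rewrite /fobj eXz eXz0 ezw ezw0 !vnorm2 !dot_col_mx.
rewrite !vnorm2 in loss.
have hk' := ler_wpM2l (ltW a1p) hk.
have h1' := ler_wpM2l (ltW a1p) hn1.
have h0' := ler_wpM2l (ltW a1p) hn0.
have hreg' := ler_wpM2l a2p hreg.
have hK : K = a1 * (dot dd dd * dot xbar0 xbar0 / (2 * specnorm M)) - G + a2 * SS / 2 by [].
have hG : G = ((a1 + vnorm r) * vnorm zt + a1 * `|zbar|) * eps by [].
rewrite -hSS in hK.
lra.
Qed.
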